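(* For every $\epsilon>0$ there is no algorithm (policy) for the DIME problem that guarantees an $n^{-1+\epsilon}$ approximation to $OPT_{full}$. Precisely: for every $\epsilon>0$ and every (possibly randomized) policy for DIME, there exist $n$, an uncertain network on $n$ nodes with parameters $T,K,L$, and a ground-truth network (a realization of the uncertain edges) such that the expected number of influenced nodes at the end of round $T$ obtained by executing the policy when the true network is the ground-truth network is strictly less than $n^{-1+\epsilon}\cdot OPT_{full}$, where $OPT_{full}$ is the maximum expected number of influenced nodes at the end of round $T$ achievable by a policy that knows the ground-truth network.
   Context: An uncertain network is a directed graph $G=(V,E)$ with $|V|=n$, whose edge set is the disjoint union of certain edges $E_c$ and uncertain edges $E_u$; each $e\in E_u$ has an existence probability $u(e)\in[0,1]$ (it exists independently with probability $u(e)$), and each $e\in E$ has a propagation probability $p(e)\in[0,1]$. A ground-truth network is the directed graph obtained by fixing, for each uncertain edge, whether it exists. Influence model: influenced nodes stay influenced forever; at each time step, every influenced node $x$ independently tries to influence each not-yet-influenced out-neighbour $y$ along an existing edge $(x,y)$, succeeding with probability $p(x,y)$; failed attempts are repeated in every subsequent time step. DIME problem: given the uncertain network and integers $T,K,L$, in each of $T$ rounds a policy chooses a set of exactly $K$ nodes, which become influenced with certainty; upon choosing them, the policy observes the true existence of all uncertain edges leaving the chosen nodes; then influence spreads for $L$ time steps according to the influence model (the policy does not observe which nodes get influenced by spread). A policy maps histories (the initial uncertain network, past choices and observations) to the next $K$-node choice. The objective is the expected total number of influenced nodes at the end of round $T$. *)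

(* Defs.v *)
From Stdlib Require Import Reals List Arith Lia.
Import ListNotations.
Open Scope R_scope.

(* An instance of DIME: an uncertain network on nodes 0..n-1 together with
   the parameters T, K, L. *)
Record instance := Instance {
  inst_n : nat;
  inst_T : nat;
  inst_K : nat;
  inst_L : nat;
  ec : nat -> nat -> bool;   (* certain edges E_c *)
  eu : nat -> nat -> bool;   (* uncertain edges E_u *)
  u  : nat -> nat -> R;      (* existence probability on E_u *)
  p  : nat -> nat -> R       (* propagation probability on E *)
}.

Definition wf_inst (I : instance) : Prop :=
  (1 <= inst_n I)%nat /\ (inst_K I <= inst_n I)%nat /\
  forall x y,
    (ec I x y = true -> eu I x y = false) /\
    ((ec I x y || eu I x y)%bool = true ->
       (x < inst_n I)%nat /\ (y < inst_n I)%nat /\ 0 <= p I x y <= 1) /\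
    (eu I x y = true -> 0 <= u I x y <= 1).

Definition is_truth (I : instance) (g : nat -> nat -> bool) : Prop :=
  forall x y, (ec I x y = true -> g x y = true) /\
              (g x y = true -> (ec I x y || eu I x y)%bool = true).

Definition valid_choice (n K : nat) (A : list nat) : Prop :=
  NoDup A /\ length A = K /\ Forall (fun x => (x < n)%nat) A.

(* Finitely supported probability distribution over choices. *)
Definition dist := list (list nat * R).

Definition valid_dist (n K : nat) (d : dist) : Prop :=
  Forall (fun aw => valid_choice n K (fst aw) /\ 0 <= snd aw) d /\
  fold_right Rplus 0 (map snd d) = 1.

Definition inb (x : nat) (A : list nat) : bool := existsb (Nat.eqb x) A.

(* Observation after choosing A: existence of every uncertain edge leaving A
   (None for edges that are not observed). *)
Definition observation := nat -> nat -> option bool.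

Definition observe (I : instance) (g : nat -> nat -> bool) (A : list nat)
  : observation :=
  fun x y => if (inb x A && eu I x y)%bool then Some (g x y) else None.

(* History seen by a DIME policy: past choices with their observations.
   A (randomized) policy maps the instance (uncertain network, T, K, L)
   and the history to a distribution over the next choice. *)
Definition history := list (list nat * observation).
Definition policy := instance -> history -> dist.

Definition valid_policy (pol : policy) : Prop :=
  forall I h, wf_inst I -> valid_dist (inst_n I) (inst_K I) (pol I h).

(* Sets of influenced nodes: boolean lists of length n (index = node). *)
Fixpoint all_subsets (n : nat) : list (list bool) :=
  match n with
  | O => [[]]
  | S m => flat_map (fun s => [true :: s; false :: s]) (all_subsets m)
  end.

Definition mem (S : list bool) (y : nat) : bool := nth y S false.

Definition add_choice (n : nat) (S : list bool) (A : list nat) : list bool :=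
  map (fun y => (mem S y || inb y A)%bool) (seq 0 n).

Definition prodR (l : list R) : R := fold_right Rmult 1 l.
Definition sumR (l : list R) : R := fold_right Rplus 0 l.

(* probability that uninfluenced y gets influenced in one time step *)
Definition q (I : instance) (g : nat -> nat -> bool) (S : list bool) (y : nat) : R :=
  1 - prodR (map (fun x => if (mem S x && g x y)%bool then 1 - p I x y else 1)
                 (seq 0 (inst_n I))).

Definition trans (I : instance) (g : nat -> nat -> bool) (S S' : list bool) : R :=
  prodR (map (fun y => if mem S y then (if mem S' y then 1 else 0)
                       else if mem S' y then q I g S y else 1 - q I g S y)
             (seq 0 (inst_n I))).

(* weighted list of states (a finitely supported distribution) *)
Definition sdist := list (list bool * R).

Definition step (I : instance) (g : nat -> nat -> bool) (D : sdist) : sdist :=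
  flat_map (fun sw => map (fun S' => (S', snd sw * trans I g (fst sw) S'))
                          (all_subsets (inst_n I))) D.

Definition expected_size (D : sdist) : R :=
  sumR (map (fun sw => snd sw * INR (length (filter (fun b => b) (fst sw)))) D).

(* [next] gives the distribution of the next choice as a function of the
   past choices (the ground truth is fixed, so observations are determined
   by the choices).  eval r cs D = expected final number of influenced nodes
   with r rounds remaining, past choices cs and current state distribution D. *)
Fixpoint eval (I : instance) (g : nat -> nat -> bool)
    (next : list (list nat) -> dist) (r : nat) (cs : list (list nat)) (D : sdist) : R :=
  match r with
  | O => expected_size D
  | S r' =>
      sumR (map (fun aw =>
        snd aw * eval I g next r' (cs ++ [fst aw])
          (Nat.iter (inst_L I) (step I g)
             (map (fun sw => (add_choice (inst_n I) (fst sw) (fst aw), snd sw)) D)))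
        (next cs))
  end.

Definition value (I : instance) (g : nat -> nat -> bool) (next : list (list nat) -> dist) : R :=
  eval I g next (inst_T I) [] [(repeat false (inst_n I), 1)].

Definition dime_next (pol : policy) (I : instance) (g : nat -> nat -> bool)
  : list (list nat) -> dist :=
  fun cs => pol I (map (fun A => (A, observe I g A)) cs).

Definition full_values (I : instance) (g : nat -> nat -> bool) (v : R) : Prop :=
  exists next : list (list nat) -> dist,
    (forall cs, valid_dist (inst_n I) (inst_K I) (next cs)) /\ v = value I g next.

(* Main.v *)
Require Import Defs.
From Stdlib Require Import Reals List Arith Lia Lra Classical Bool ZArith.
Import ListNotations.
Open Scope R_scope.

Lemma sumR_app l1 l2 : sumR (l1 ++ l2) = sumR l1 + sumR l2.
Proof. induction l1; simpl; [ring| rewrite IHl1; ring]. Qed.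

Lemma sumR_flat2 {A} (f : list bool -> R) (t u : A -> list bool) L :
  sumR (map f (flat_map (fun s => [t s; u s]) L)) = sumR (map (fun s => f (t s) + f (u s)) L).
Proof. induction L; simpl; [ring| rewrite IHL; ring]. Qed.

Lemma sum_subsets : forall n (b : nat -> bool) (c : list bool -> R),
  sumR (map (fun s => prodR (map (fun y => if Bool.eqb (mem s y) (b y) then 1 else 0) (seq 0 n)) * c s) (all_subsets n)) = c (map b (seq 0 n)).
Proof.
  induction n; intros b c.
  - simpl. unfold prodR. simpl. ring.
  - cbn [all_subsets]. rewrite sumR_flat2.
    replace (map b (seq 0 (S n))) with (b 0%nat :: map (fun y => b (S y)) (seq 0 n)) by (simpl; rewrite <- seq_shift, map_map; reflexivity).
    rewrite <- (IHn (fun y => b (S y)) (fun s => c (b 0%nat :: s))).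
    f_equal. apply map_ext. intros s.
    cbn [seq map prodR fold_right]. rewrite <- seq_shift, !map_map.
    unfold mem; cbn [nth]. fold prodR.
    destruct (b 0%nat); simpl; unfold prodR; ring.
  Qed.
Lemma sumR_map_plus {A} (f g : A -> R) l : sumR (map (fun x => f x + g x) l) = sumR (map f l) + sumR (map g l).
Proof. induction l; simpl; [ring| rewrite IHl; ring]. Qed.
Lemma sumR_map_scal {A} (f : A -> R) c l : sumR (map (fun x => c * f x) l) = c * sumR (map f l).
Proof. induction l; simpl; [ring| rewrite IHl; ring]. Qed.
Lemma sumR_exch {A B} (f : A -> B -> R) l1 l2 :
  sumR (map (fun x => sumR (map (fun y => f x y) l2)) l1) = sumR (map (fun y => sumR (map (fun x => f x y) l1)) l2).
Proof.
  induction l1; simpl.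
  - induction l2; simpl; [ring| rewrite <- IHl2; ring].
  - rewrite IHl1, <- sumR_map_plus. reflexivity.
Qed.
Lemma prodR_one (f : nat -> R) l : (forall x, In x l -> f x = 1) -> prodR (map f l) = 1.
Proof. induction l; simpl; intros H; [reflexivity|]. unfold prodR in *; simpl. rewrite IHl, H; auto; ring. Qed.
Lemma prodR_zero (f : nat -> R) l x : In x l -> f x = 0 -> prodR (map f l) = 0.
Proof. induction l; simpl; intros H H0; [contradiction|]. unfold prodR in *; simpl.
  destruct H as [<-|H]; [rewrite H0; ring| rewrite IHl; auto; ring]. Qed.
Lemma count_nat a : forall k s, length (filter (fun b => b) (map (fun y => Nat.eqb y a) (seq s k))) = (if andb (Nat.leb s a) (Nat.ltb a (s + k)) then 1 else 0)%nat.
Proof.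
  induction k; intros s; simpl.
  - destruct (Nat.leb_spec s a); destruct (Nat.ltb_spec a (s+0)); simpl; lia.
  - destruct (Nat.eqb_spec s a); simpl; rewrite IHk.
    + subst. destruct (Nat.leb_spec (S a) a); destruct (Nat.ltb_spec a (S a + k)); destruct (Nat.leb_spec a a); destruct (Nat.ltb_spec a (a + S k)); simpl; lia.
    + destruct (Nat.leb_spec (S s) a); destruct (Nat.ltb_spec a (S s + k)); destruct (Nat.leb_spec s a); destruct (Nat.ltb_spec a (s + S k)); simpl; lia.
Qed.
Lemma count_R a w : forall k s, sumR (map (fun h => if Nat.eqb a h then w else 0) (seq s k)) = if andb (Nat.leb s a) (Nat.ltb a (s + k)) then w else 0.
Proof.
  induction k; intros s; simpl.
  - destruct (Nat.leb_spec s a); destruct (Nat.ltb_spec a (s+0)); simpl; try lra; lia.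
  - destruct (Nat.eqb_spec a s); simpl; rewrite IHk.
    + subst. destruct (Nat.leb_spec (S s) s); destruct (Nat.ltb_spec s (S s + k)); destruct (Nat.leb_spec s s); destruct (Nat.ltb_spec s (s + S k)); simpl; try lra; lia.
    + destruct (Nat.leb_spec (S s) a); destruct (Nat.ltb_spec a (S s + k)); destruct (Nat.leb_spec s a); destruct (Nat.ltb_spec a (s + S k)); simpl; try lra; lia.
Qed.

Definition myI (n : nat) : instance :=
  Instance n 1 1 1 (fun _ _ => false) (fun x y => andb (Nat.ltb x n) (Nat.ltb y n))
    (fun _ _ => 1) (fun _ _ => 1).
Definition myg (n h : nat) : nat -> nat -> bool := fun x y => andb (Nat.eqb x h) (Nat.ltb y n).

Lemma trans_eq n h S S' : (h < n)%nat ->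
  trans (myI n) (myg n h) S S' =
  prodR (map (fun y => if Bool.eqb (mem S' y) (orb (mem S y) (mem S h)) then 1 else 0) (seq 0 n)).
Proof.
  intros Hh. unfold trans. cbn [inst_n myI]. f_equal. apply map_ext_in. intros y Hy.
  apply in_seq in Hy.
  assert (Hq : q (myI n) (myg n h) S y = if mem S h then 1 else 0).
  { unfold q, myg. cbn [inst_n p myI].
    assert (Hy' : Nat.ltb y n = true) by (apply Nat.ltb_lt; lia).
    rewrite Hy'.
    destruct (mem S h) eqn:E.
    - rewrite (prodR_zero _ _ h). ring. apply in_seq; lia.
      rewrite E, Nat.eqb_refl. simpl. ring.
    - rewrite prodR_one. ring. intros x _. destruct (Nat.eqb_spec x h).
      + subst. rewrite E. reflexivity.
      + destruct (mem S x); reflexivity. }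
  rewrite Hq. destruct (mem S y), (mem S' y), (mem S h); simpl; lra.
Qed.

Lemma V_eq n h A : (h < n)%nat ->
  let S := add_choice n (repeat false n) A in
  expected_size (step (myI n) (myg n h) [(S, 1)]) =
  INR (length (filter (fun b => b) (map (fun y => orb (mem S y) (mem S h)) (seq 0 n)))).
Proof.
  intros Hh S. unfold step, expected_size. cbn [flat_map inst_n myI fst snd].
  rewrite app_nil_r, map_map. cbn [fst snd].
  rewrite (map_ext _ (fun s => prodR (map (fun y => if Bool.eqb (mem s y) (orb (mem S y) (mem S h)) then 1 else 0) (seq 0 n)) * (fun s => INR (length (filter (fun b => b) s))) s)).
  - apply (sum_subsets n (fun y => orb (mem S y) (mem S h)) (fun s => INR (length (filter (fun b => b) s)))).
  - intros s. rewrite trans_eq by exact Hh. ring.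
Qed.

Lemma mem_add n S0 A y : (y < n)%nat -> mem (add_choice n S0 A) y = orb (mem S0 y) (inb y A).
Proof.
  intros Hy. unfold add_choice, mem.
  rewrite (@nth_indep _ _ _ false ((fun y => (nth y S0 false || inb y A)%bool) 0%nat)) by (rewrite length_map, length_seq; lia).
  rewrite (map_nth (fun y0 => (nth y0 S0 false || inb y0 A)%bool) (seq 0 n) 0%nat y), seq_nth by lia. reflexivity.
Qed.

Lemma V_le n h A : (h < n)%nat ->
  expected_size (step (myI n) (myg n h) [(add_choice n (repeat false n) A, 1)]) <= INR n.
Proof.
  intros Hh. rewrite V_eq by exact Hh. apply le_INR.
  eapply Nat.le_trans. apply filter_length_le. rewrite length_map, length_seq. lia.
Qed.

Lemma filter_true (l : list nat) : length (filter (fun b => b) (map (fun _ => true) l)) = length l.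
Proof. induction l; simpl; auto. Qed.

Lemma V_single n h a : (h < n)%nat -> (a < n)%nat ->
  expected_size (step (myI n) (myg n h) [(add_choice n (repeat false n) [a], 1)]) =
  if Nat.eqb a h then INR n else 1.
Proof.
  intros Hh Ha. rewrite V_eq by exact Hh.
  rewrite (mem_add n _ _ h Hh). unfold mem at 2. rewrite nth_repeat. simpl orb.
  rewrite (orb_false_r (h =? a)).
  destruct (Nat.eqb_spec h a).
  - subst. rewrite Nat.eqb_refl.
    rewrite (map_ext_in _ (fun _ => true)).
    + rewrite filter_true, length_seq. reflexivity.
    + intros; apply orb_true_r.
  - replace (Nat.eqb a h) with false by (symmetry; apply Nat.eqb_neq; lia).
    rewrite (map_ext_in _ (fun y => Nat.eqb y a)).
    + rewrite count_nat. replace ((0 <=? a) && (a <? 0 + n))%bool with true. reflexivity.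
      symmetry. apply andb_true_iff; split; [apply Nat.leb_le| apply Nat.ltb_lt]; lia.
    + intros y Hy. apply in_seq in Hy. rewrite mem_add by lia.
      unfold mem; rewrite nth_repeat. simpl. rewrite !orb_false_r. reflexivity.
Qed.

Lemma value_formula n h next :
  value (myI n) (myg n h) next =
  sumR (map (fun aw => snd aw * expected_size (step (myI n) (myg n h) [(add_choice n (repeat false n) (fst aw), 1)])) (next [])).
Proof. reflexivity. Qed.

Lemma sum_le (d : list (list nat * R)) (X : list nat * R -> R) c :
  Forall (fun aw => 0 <= snd aw) d -> (forall aw, In aw d -> X aw <= c) ->
  sumR (map (fun aw => snd aw * X aw) d) <= c * sumR (map snd d).
Proof.
  induction d as [|[A w] d IH]; simpl; intros H1 H2; [lra|].
  inversion H1; subst. simpl in *.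
  assert (X (A, w) <= c) by (apply H2; auto).
  assert (sumR (map (fun aw => snd aw * X aw) d) <= c * sumR (map snd d)) by (apply IH; auto).
  unfold sumR in *; simpl. nra.
Qed.

Lemma pigeon (f : nat -> R) l c : l <> [] -> (forall x, In x l -> f x > c) ->
  sumR (map f l) > INR (length l) * c.
Proof.
  induction l as [|x l IH]; intros Hne H; [congruence|].
  destruct l as [|y l].
  - simpl. unfold sumR; simpl. specialize (H x (or_introl eq_refl)). lra.
  - change (sumR (map f (x :: y :: l))) with (f x + sumR (map f (y :: l))).
    rewrite length_cons, S_INR.
    assert (f x > c) by (apply H; left; auto).
    assert (sumR (map f (y :: l)) > INR (length (y :: l)) * c).
    { apply IH. discriminate. intros z Hz; apply H; right; auto. }
    lra.
Qed.

Lemma exists_n (r : R) : exists n : nat, (1 <= n)%nat /\ r < INR n.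
Proof.
  destruct (archimed (Rmax r 0)) as [H1 _].
  exists (S (Z.to_nat (up (Rmax r 0)))). split. lia.
  rewrite S_INR, INR_IZR_INZ, Z2Nat.id.
  - pose proof (Rmax_l r 0). lra.
  - apply le_IZR. pose proof (Rmax_r r 0). simpl. lra.
Qed.

Theorem theorem1 :
  forall eps : R, 0 < eps ->
  forall pol : policy, valid_policy pol ->
  exists (I : instance) (g : nat -> nat -> bool),
    wf_inst I /\ is_truth I g /\
    exists OPT_full : R,
      is_lub (full_values I g) OPT_full /\
      value I g (dime_next pol I g) < Rpower (INR (inst_n I)) (-1 + eps) * OPT_full.
Proof.
  intros eps Heps pol Hpol.
  destruct (exists_n (exp (ln 2 / eps))) as [n [Hn1 Hn]].
  assert (Hnpos : 0 < INR n) by (apply lt_0_INR; lia).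
  assert (Hwf : wf_inst (myI n)).
  { unfold wf_inst; cbn. split; [lia|split;[lia|]]. intros x y. split; [discriminate|].
    split; [|lra]. intros H. apply andb_true_iff in H as [H1 H2].
    apply Nat.ltb_lt in H1, H2. split; [lia|split;[lia|lra]]. }
  pose (d := pol (myI n) []).
  destruct (Hpol (myI n) [] Hwf) as [Hd Hsum]. fold d in Hd, Hsum. cbn [inst_n inst_K myI] in Hd.
  assert (Hsing : forall aw, In aw d -> exists a, fst aw = [a] /\ (a < n)%nat /\ 0 <= snd aw).
  { intros aw Hin. rewrite Forall_forall in Hd. destruct (Hd aw Hin) as [[_ [Hl Hf]] Hw].
    destruct (fst aw) as [|a [|b l]]; try discriminate. exists a. inversion Hf; subst. auto. }
  pose (W := fun h => sumR (map (fun aw => if Nat.eqb (hd 0%nat (fst aw)) h then snd aw else 0) d)).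
  assert (HW : sumR (map W (seq 0 n)) = 1).
  { unfold W. rewrite <- (sumR_exch (fun aw h => if Nat.eqb (hd 0%nat (fst aw)) h then snd aw else 0)).
    rewrite <- Hsum. change (fold_right Rplus 0 (map snd d)) with (sumR (map snd d)).
    f_equal. apply map_ext_in. intros aw Hin. destruct (Hsing aw Hin) as [a [Ha [Han _]]].
    rewrite Ha. simpl hd. rewrite count_R.
    replace ((0 <=? a) && (a <? 0 + n))%bool with true. reflexivity.
    symmetry. apply andb_true_iff; split; [apply Nat.leb_le| apply Nat.ltb_lt]; lia. }
  assert (Hex : exists h, In h (seq 0 n) /\ W h <= 1 / INR n).
  { apply NNPP. intros Hno.
    assert (Hgt : sumR (map W (seq 0 n)) > INR (length (seq 0 n)) * (1 / INR n)).
    { apply pigeon. destruct n; [lia|discriminate].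
      intros x Hx. apply Rnot_le_gt. intros Hle. apply Hno. eauto. }
    rewrite length_seq, HW in Hgt. field_simplify in Hgt; lra. }
  destruct Hex as [h [Hh HWh]]. apply in_seq in Hh.
  assert (Hhn : (h < n)%nat) by lia.
  exists (myI n), (myg n h). split; [exact Hwf|]. split.
  { intros x y. cbn. split; [discriminate|]. intros H. unfold myg in H.
    apply andb_true_iff in H as [H1 H2]. apply Nat.eqb_eq in H1. subst.
    change ((h <? n) && (y <? n) = true)%bool. rewrite H2. apply Nat.ltb_lt in Hhn. rewrite Hhn. reflexivity. }
  exists (INR n). split.
  - split.
    + intros v [next [Hnext ->]]. rewrite value_formula.
      destruct (Hnext []) as [Hd' Hs']. cbn [inst_n inst_K myI] in Hd'.
      eapply Rle_trans; [apply (sum_le _ _ (INR n))|].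
      * rewrite Forall_forall in Hd' |- *. intros aw Hin. apply (Hd' aw Hin).
      * intros aw _. apply V_le. exact Hhn.
      * right. change (sumR (map snd (next []))) with (fold_right Rplus 0 (map snd (next []))); rewrite Hs'; ring.
    + intros b Hb. apply Hb. exists (fun _ => [([h], 1)]). split.
      * intros cs. cbn. split.
        -- constructor; [|constructor]. simpl. split; [|lra].
           split; [constructor; [simpl; tauto|constructor]|]. split; [reflexivity|].
           constructor; [exact Hhn|constructor].
        -- simpl; ring.
      * rewrite value_formula. cbn [map fst snd].
        rewrite V_single by exact Hhn. rewrite Nat.eqb_refl. unfold sumR; simpl. ring.
  - cbn [inst_n myI].
    assert (Hval : value (myI n) (myg n h) (dime_next pol (myI n) (myg n h)) = 1 + (INR n - 1) * W h).
    { rewrite value_formula. unfold dime_next. simpl map at 2. fold d.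
      transitivity (sumR (map snd d) + (INR n - 1) * W h);
        [| change (sumR (map snd d)) with (fold_right Rplus 0 (map snd d)); rewrite Hsum; reflexivity].
      unfold W. rewrite <- sumR_map_scal, <- sumR_map_plus.
      f_equal. apply map_ext_in. intros aw Hin. destruct (Hsing aw Hin) as [a [Ha [Han _]]].
      rewrite Ha. rewrite V_single by assumption. simpl hd.
      destruct (Nat.eqb a h); ring. }
    rewrite Hval.
    assert (Hp : Rpower (INR n) (-1 + eps) * INR n = Rpower (INR n) eps).
    { rewrite <- (Rpower_1 (INR n)) at 2 by exact Hnpos. rewrite <- Rpower_plus.
      f_equal. ring. }
    rewrite Hp.
    assert (H2 : 2 < Rpower (INR n) eps).
    { unfold Rpower. rewrite <- (exp_ln 2) by lra. apply exp_increasing.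
      assert (ln 2 / eps < ln (INR n)).
      { rewrite <- (ln_exp (ln 2 / eps)). apply ln_increasing. apply exp_pos. exact Hn. }
      apply (Rmult_lt_compat_l eps) in H; [|exact Heps].
      replace (eps * (ln 2 / eps)) with (ln 2) in H by (field; lra). lra. }
    assert (HWn : (INR n - 1) * W h <= (INR n - 1) * (1 / INR n)).
    { apply Rmult_le_compat_l; [|exact HWh]. apply (le_INR 1) in Hn1. simpl in Hn1. lra. }
    assert ((INR n - 1) * (1 / INR n) < 1).
    { replace ((INR n - 1) * (1 / INR n)) with (1 - 1 / INR n) by (field; lra).
      assert (0 < 1 / INR n) by (apply Rdiv_lt_0_compat; lra). lra. }
    lra.
Qed.
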